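(* Let $f$ be a probability density on $\mathbb{R}$ with $f\in\mathbb{L}_2$ and $f(x)=f(-x)$ for all $x\in\mathbb{R}$. Let $\Theta$ be a compact subset of $(0,1/2)\times(\mathbb{R}^2\setminus\Delta)$, where $\Delta=\{(x,x):x\in\mathbb{R}\}$, and let $\theta_0=(p_0,\alpha_0,\beta_0)\in\Theta$. Let $g(x)=p_0f(x-\alpha_0)+(1-p_0)f(x-\beta_0)$, $x\in\mathbb{R}$. For $\theta=(p,\alpha,\beta)\in\Theta$ and $u\in\mathbb{R}$ put $M(\theta,u)=pe^{iu\alpha}+(1-p)e^{iu\beta}$. Then, for $\theta\in\Theta$, we have $\mathrm{Im}\left(g^*(u)/M(\theta,u)\right)=0$ for all $u\in\mathbb{R}$ if and only if $\theta=\theta_0$.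
   Context: For an integrable function $f$, $f^*(u)=\int_{\mathbb{R}}e^{ixu}f(x)\,dx$ denotes its Fourier transform. Since $p<1/2$ on $\Theta$, $M(\theta,u)\neq 0$ for all $u$. *)

(* Defs.v *)
From HB Require Import structures.
From mathcomp Require Import all_boot all_order all_algebra.
From mathcomp Require Import all_classical all_reals all_analysis.
From mathcomp Require Import complex.
Set Implicit Arguments. Unset Strict Implicit. Unset Printing Implicit Defensive.
Import Order.TTheory GRing.Theory Num.Theory.
Import numFieldNormedType.Exports.
Local Open Scope classical_set_scope.
Local Open Scope ring_scope.

Definition cexpi {R : realType} (t : R) : R[i] := (cos t +i* sin t)%C.

(* Fourier transform f^*(u) = \int e^{ixu} f(x) dx, written out as
   \int cos(ux) f(x) dx + i \int sin(ux) f(x) dx (Lebesgue integral on R). *)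
Definition fourier {R : realType} (f : R -> R) (u : R) : R[i] :=
  ((Rintegral lebesgue_measure setT (fun x => cos (x * u) * f x))
     +i* (Rintegral lebesgue_measure setT (fun x => sin (x * u) * f x)))%C.

Definition prob_density {R : realType} (f : R -> R) : Prop :=
  measurable_fun setT f /\ (forall x, 0 <= f x) /\
  (\int[lebesgue_measure]_(x in setT) (f x)%:E = 1)%E.

Definition in_L2 {R : realType} (f : R -> R) : Prop :=
  measurable_fun setT f /\
  (\int[lebesgue_measure]_(x in setT) ((f x) ^+ 2)%:E < +oo)%E.

Definition Mth {R : realType} (th : R * R * R) (u : R) : R[i] :=
  let: (p, a, b) := th in
  (p%:C * cexpi (u * a) + (1 - p)%:C * cexpi (u * b))%C.

Definition mixture {R : realType} (f : R -> R) (th : R * R * R) (x : R) : R :=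
  let: (p, a, b) := th in p * f (x - a) + (1 - p) * f (x - b).

(* Main.v *)
Require Import Defs.
From HB Require Import structures.
From mathcomp Require Import all_boot all_order all_algebra.
From mathcomp Require Import all_classical all_reals all_analysis.
From mathcomp Require Import complex.
From mathcomp Require Import ring lra.
From mathcomp Require Import measurable_realfun lebesgue_integral_under.
Import Order.TTheory GRing.Theory Num.Theory.
Import numFieldNormedType.Exports.
Local Open Scope classical_set_scope.
Local Open Scope ring_scope.

Section Alg.
Variable R : realFieldType.
Definition En (p0 a0 b0 p a b : R) (n : nat) :=
  p0 * p * (a0-a)^+n + p0 * (1-p) * (a0-b)^+n + (1-p0) * p * (b0-a)^+n + (1-p0) * (1-p) * (b0-b)^+n.
Let K2 (p t : R) := p * (1-p) * t^+2.
Let K3 (p t : R) := p * (1-p) * (2 * p-1) * t^+3.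
Let K4 (p t : R) := p * (1-p) * (1-6 * (p * (1-p))) * t^+4.
Let K5 (p t : R) := K3 p t  *  (1-12 * (p * (1-p))) * t^+2.
Let K7 (p t : R) := K3 p t  *  (1-60 * (p * (1-p))+360 * (p * (1-p))^+2) * t^+4.
Lemma E1c p0 t0 p t m m' :
  En p0 (m-(1-p0) * t0) (m+p0 * t0) p (m'-(1-p) * t) (m'+p * t) 1 = m - m'.
Proof. rewrite /En; ring. Qed.
Lemma E3c p0 t0 p t m :
  En p0 (m-(1-p0) * t0) (m+p0 * t0) p (m-(1-p) * t) (m+p * t) 3 = K3 p0 t0 - K3 p t.
Proof. rewrite /En /K3; ring. Qed.
Lemma E5c p0 t0 p t m :
  En p0 (m-(1-p0) * t0) (m+p0 * t0) p (m-(1-p) * t) (m+p * t) 5 =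
  (K5 p0 t0 - K5 p t) + 10 * (K2 p0 t0 + K2 p t) * (K3 p0 t0 - K3 p t).
Proof. rewrite /En /K5 /K3 /K2; ring. Qed.
Lemma E7c p0 t0 p t m :
  En p0 (m-(1-p0) * t0) (m+p0 * t0) p (m-(1-p) * t) (m+p * t) 7 =
  (K7 p0 t0 - K7 p t) + 21 * (K2 p0 t0 + K2 p t) * (K5 p0 t0 - K5 p t)
  + (K3 p0 t0 - K3 p t) * (35 * (K4 p0 t0 + K4 p t) + 105 * (K2 p0 t0 + K2 p t)^+2).
Proof. rewrite /En /K7 /K5 /K4 /K3 /K2; ring. Qed.
Lemma alg_c (p0 t0 p t : R) : 0 < p0 -> p0 < 2^-1 -> 0 < p -> p < 2^-1 ->
  t0 != 0 -> t != 0 -> K3 p0 t0 = K3 p t -> K5 p0 t0 = K5 p t -> K7 p0 t0 = K7 p t ->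
  p = p0 /\ t = t0.
Proof.
move=> hp0 hp0' hp hp' ht0 ht e3 e5 e7.
have hK : K3 p t != 0.
  rewrite /K3 !mulf_neq0 ?expf_neq0 //.
  - by rewrite gt_eqF.
  - rewrite subr_eq0 eq_sym; apply/negP => /eqP h; lra.
  - rewrite subr_eq0; apply/negP => /eqP h; lra.
have e5' : (1-12 * (p0 * (1-p0))) * t0^+2 = (1-12 * (p * (1-p))) * t^+2.
  by apply: (mulfI hK); move: e5; rewrite /K5 e3 -!mulrA.
have e7' : (1-60 * (p0 * (1-p0))+360 * (p0 * (1-p0))^+2) * t0^+4 =
           (1-60 * (p * (1-p))+360 * (p * (1-p))^+2) * t^+4.
  by apply: (mulfI hK); move: e7; rewrite /K7 e3 -!mulrA.
have id7 : forall A s : R, 2 * ((1-60 * A+360 * A^+2) * s^+4) =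
    5 * ((1-12 * A) * s^+2)^+2 - 3 * (s^+2)^+2 by move=> A s; ring.
have ht4 : (t0^+2)^+2 = (t^+2)^+2.
  have := id7 (p0 * (1-p0)) t0; have := id7 (p * (1-p)) t.
  rewrite e7' e5'; lra.
have a0 : 0 < t0^+2 by rewrite exprn_even_gt0.
have a1 : 0 < t^+2 by rewrite exprn_even_gt0.
have ht2 : t0^+2 = t^+2.
  move: ht4 a0 a1; set x := t0^+2; set y := t^+2 => h a0 a1.
  have : (x - y) * (x + y) = 0 by rewrite -subr_sqr h subrr.
  move/eqP; rewrite mulf_eq0 => /orP[/eqP|/eqP] h'; lra.
have hA : p0 * (1-p0) = p * (1-p).
  move: e5'; rewrite ht2 => /(mulIf (lt0r_neq0 a1)) h; lra.
have hpp : p = p0.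
  have e : (p - p0) * (1 - p - p0) = p * (1-p) - p0 * (1-p0) by ring.
  have : (p - p0) * (1 - p - p0) = 0 by rewrite e hA subrr.
  move/eqP; rewrite mulf_eq0 => /orP[/eqP|/eqP] h; lra.
split => //.
move: e3; rewrite /K3 hpp => e3.
have hK0 : p0 * (1-p0) * (2 * p0-1) != 0 by move: hK; rewrite /K3 hpp mulf_eq0 negb_or => /andP[].
have e3' := mulfI hK0 e3.
have : (t - t0) * (t^+2 + t * t0 + t0^+2) = 0.
  have -> : (t - t0) * (t^+2 + t * t0 + t0^+2) = t^+3 - t0^+3 by ring.
  by rewrite e3' subrr.
move/eqP; rewrite mulf_eq0 => /orP[/eqP|/eqP] h; first lra.
have : 0 < (2 * t + t0)^+2 + 3 * t0^+2 by rewrite ltr_pwDr ?sqr_ge0 // mulr_gt0.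
have -> : (2 * t + t0)^+2 + 3 * t0^+2 = 4 * (t^+2 + t * t0 + t0^+2) by ring.
by rewrite h mulr0 ltxx.
Qed.

Lemma alg_main (p0 a0 b0 p a b : R) : 0 < p0 -> p0 < 2^-1 -> 0 < p -> p < 2^-1 ->
  a0 != b0 -> a != b -> En p0 a0 b0 p a b 1 = 0 -> En p0 a0 b0 p a b 3 = 0 ->
  En p0 a0 b0 p a b 5 = 0 -> En p0 a0 b0 p a b 7 = 0 ->
  (p, a, b) = (p0, a0, b0).
Proof.
move=> hp0 hp0' hp hp' hab0 hab e1 e3 e5 e7.
set m := p0 * a0 + (1 - p0) * b0; set m' := p * a + (1 - p) * b.
set t0 := b0 - a0; set t := b - a.
have ea0 : a0 = m - (1-p0) * t0 by rewrite /m /t0; ring.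
have eb0 : b0 = m + p0 * t0 by rewrite /m /t0; ring.
have ea : a = m' - (1-p) * t by rewrite /m' /t; ring.
have eb : b = m' + p * t by rewrite /m' /t; ring.
have H n : En p0 a0 b0 p a b n =
   En p0 (m - (1-p0) * t0) (m + p0 * t0) p (m' - (1-p) * t) (m' + p * t) n.
  by rewrite -ea0 -eb0 -ea -eb.
have emm : m' = m by move: e1; rewrite H E1c => /eqP; rewrite subr_eq0 => /eqP.
move: e3 e5 e7; rewrite !H emm E3c E5c E7c.
move=> /eqP; rewrite subr_eq0 => /eqP k3.
rewrite k3 subrr mulr0 addr0 => /eqP; rewrite subr_eq0 => /eqP k5.
rewrite k5 !subrr mulr0 mul0r !addr0 => /eqP; rewrite subr_eq0 => /eqP k7.
have ht0 : t0 != 0 by rewrite /t0 subr_eq0 eq_sym.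
have ht : t != 0 by rewrite /t subr_eq0 eq_sym.
have [hpp htt] := alg_c _ _ _ _ hp0 hp0' hp hp' ht0 ht k3 k5 k7.
by rewrite ea eb ea0 eb0 emm hpp htt.
Qed.
End Alg.

Section D.
Variable R : realType.
Lemma der_lin (d u : R) : is_derive u 1 (fun v : R => d * v) d.
Proof.
have := @is_deriveZ R R R id d u 1 1 _.
rewrite /GRing.scale /= mulr1; apply.
Qed.
Lemma der_sin (c d : R) (n : nat) (u : R) : is_derive u 1 (fun v => c * d^+n * sin (d * v)) (c * d^+n.+1 * cos (d * u)).
Proof.
have h := @is_derive1_comp R sin (fun v => d * v) u _ _ (is_derive_sin _) (der_lin d u).
have := @is_deriveZ R R R _ (c * d^+n) u 1 _ h.
rewrite /GRing.scale /= => H. apply: (is_derive_eq H); rewrite exprS; ring. Qed.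

Lemma der_cos (c d : R) (n : nat) (u : R) : is_derive u 1 (fun v => c * d^+n * cos (d * v)) (- (c * d^+n.+1 * sin (d * u))).
Proof.
have h := @is_derive1_comp R cos (fun v => d * v) u _ _ (is_derive_cos _) (der_lin d u).
have := @is_deriveZ R R R _ (c * d^+n) u 1 _ h.
rewrite /GRing.scale /= => H. apply: (is_derive_eq H); rewrite exprS; ring. Qed.

Lemma zprop (g h : R -> R) (e : R) : (forall x : R, is_derive x 1 g (h x)) ->
  (forall x, ball 0 e x -> g x = 0) -> forall x : R, ball 0 e x -> h x = 0.
Proof.
move=> dg g0 x hx.
have nb : \forall y \near x, ball 0 e y by have := ball_open (0:R) e; rewrite openE => /(_ x hx).
have hc : is_derive x 1 (cst (0:R)) 0 by exact: is_derive_cst.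
have : is_derive x 1 g 0.
  apply: (near_eq_is_derive _ hc).
  by near=> y; rewrite g0 //; near: y.
move=> H0; have := dg x; move=> [_ <-]; by case: H0.
Unshelve. all: end_near.
Qed.

Variables (c1 c2 c3 c4 d1 d2 d3 d4 : R).
Definition Ssum (n : nat) (u : R) := c1 * d1^+n * sin (d1 * u) + c2 * d2^+n * sin (d2 * u)
  + c3 * d3^+n * sin (d3 * u) + c4 * d4^+n * sin (d4 * u).
Definition Csum (n : nat) (u : R) := c1 * d1^+n * cos (d1 * u) + c2 * d2^+n * cos (d2 * u)
  + c3 * d3^+n * cos (d3 * u) + c4 * d4^+n * cos (d4 * u).
Lemma derS (n : nat) (u : R) : is_derive u 1 (Ssum n) (Csum n.+1 u).
Proof.
rewrite /Ssum /Csum.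
apply: is_deriveD; [apply: is_deriveD; [apply: is_deriveD|]|]; exact: der_sin.
Qed.
Lemma derC (n : nat) (u : R) : is_derive u 1 (Csum n) (- Ssum n.+1 u).
Proof.
rewrite /Ssum /Csum !opprD.
apply: is_deriveD; [apply: is_deriveD; [apply: is_deriveD|]|]; exact: der_cos.
Qed.
Lemma zero_moments (e : R) : 0 < e -> (forall x, ball 0 e x -> Ssum 0 x = 0) ->
  forall k, Csum k.*2.+1 0 = 0.
Proof.
move=> e0 h0.
have S2 : forall k x, ball 0 e x -> Ssum k.*2 x = 0.
  elim=> [//|k IH].
  have hc := zprop _ _ _ (derS k.*2) IH.
  have := zprop _ _ _ (derC k.*2.+1) hc.
  move=> H x hx; have := H x hx; rewrite doubleS => /eqP; rewrite oppr_eq0 => /eqP //.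
move=> k; have := zprop _ _ _ (derS k.*2) (S2 k) 0 (ballxx _ e0).
done.
Qed.
Lemma Csum0 n : Csum n 0 = c1 * d1^+n + c2 * d2^+n + c3 * d3^+n + c4 * d4^+n.
Proof. by rewrite /Csum !mulr0 cos0 !mulr1. Qed.
End D.

Section M.
Variable R : realType.
Local Notation leb := (@lebesgue_measure R).

Lemma mshift (a : R) : measurable_fun setT (fun x : R => x - a).
Proof. by apply: continuous_measurable_fun => x; apply: continuousB => //; exact: cvg_cst. Qed.
Lemma mneg : measurable_fun setT (fun x : R => - x).
Proof. exact: measurableT_comp. Qed.

Lemma mp_shift (a : R) A : measurable A -> leb ((fun x => x - a) @^-1` A) = leb A.
Proof.
move=> mA; apply/esym.
have := @lebesgue_measure_unique R (@pushforward _ _ (measurableTypeR R) (measurableTypeR R) R leb (fun x => x - a) : {measure set (measurableTypeR R) -> \bar R}).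
apply; [exact: mshift| |exact: mA]; move=> ? X [[x1 x2] _ <-]; rewrite /pushforward /=.
change (leb `]x1, x2]%classic = leb ((fun x => x - a) @^-1` `]x1, x2]%classic)). have -> : (fun x => x - a) @^-1` `]x1, x2]%classic = `]x1 + a, x2 + a]%classic.
  apply/seteqP; split => y /=; rewrite !in_itv /= => /andP[h1 h2]; apply/andP; split; lra.
rewrite !lebesgue_measure_itv /= !lte_fin ltrD2r; case: ifP => // _.
by rewrite -!EFinD; congr EFin; ring.
Qed.

Lemma mp_neg A : measurable A -> leb ((fun x : R => - x) @^-1` A) = leb A.
Proof.
move=> mA; apply/esym.
have := @lebesgue_measure_unique R (@pushforward _ _ (measurableTypeR R) (measurableTypeR R) R leb (fun x => - x) : {measure set (measurableTypeR R) -> \bar R}).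
apply; [exact: mneg| |exact: mA]; move=> ? X [[x1 x2] _ <-]; rewrite /pushforward /=.
change (leb `]x1, x2]%classic = leb ((fun x => - x) @^-1` `]x1, x2]%classic)).
have -> : (fun x => - x) @^-1` `]x1, x2]%classic = `[- x2, - x1[%classic.
  apply/seteqP; split => y /=; rewrite !in_itv /= => /andP[h1 h2]; apply/andP; split; lra.
rewrite !lebesgue_measure_itv /= ?bnd_simp !lte_fin ltrN2; case: ifP => // _.
by rewrite -!EFinD; congr EFin; ring.
Qed.

Local Notation RT := (measurableTypeR R).
Definition pfm (phi : RT -> RT) (mphi : measurable_fun [set: RT] phi) : {measure set RT -> \bar R}.
Proof. refine (@pushforward _ _ RT RT R leb phi : {measure set RT -> \bar R}); exact: mphi. Defined.
Lemma transfer (phi : RT -> RT) (mphi : measurable_fun [set: RT] phi)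
  (mp : forall A, measurable A -> leb (phi @^-1` A) = leb A) (h : RT -> R) :
  measurable_fun [set: RT] h -> leb.-integrable setT (EFin \o h) ->
  leb.-integrable setT (EFin \o (h \o phi)) /\
  (\int[leb]_x (h (phi x))%:E = \int[leb]_x (h x)%:E)%E.
Proof.
move=> mh ih.
pose P := @pfm phi mphi.
have eqm : forall (F : RT -> \bar R), (\int[P]_x F x = \int[leb]_x F x)%E.
  move=> F; apply: eq_measure_integral => A mA _; exact: mp.
have i2 : leb.-integrable setT (EFin \o (h \o phi)).
  apply/integrableP; split; first by apply/measurable_EFinP; exact: measurableT_comp.
  move/integrableP: ih => [_ ih].
  have := @ge0_integral_pushforward _ _ RT RT R phi mphi leb setT (fun y => `|(h y)%:E|)%E.
  rewrite preimage_setT => <- //.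
  - by move: ih; rewrite -eqm.
  - by apply: measurableT_comp => //; apply/measurable_EFinP.
split => //.
have := @integral_pushforward _ _ RT RT R phi mphi leb setT (EFin \o h).
rewrite preimage_setT => <- //.
by apply/measurable_EFinP.
Qed.
End M.

Section F.
Variable R : realType.
Local Notation leb := (@lebesgue_measure R).
Local Notation RT := (measurableTypeR R).
Variable f : R -> R.
Hypothesis mf : measurable_fun setT f.
Hypothesis f0 : forall x, 0 <= f x.
Hypothesis f1 : (\int[leb]_(x in setT) (f x)%:E = 1)%E.
Hypothesis fe : forall x, f x = f (- x).

Lemma intf : leb.-integrable setT (EFin \o f).
Proof.
apply/integrableP; split; first exact/measurable_EFinP.
under eq_integral do rewrite /= ger0_norm ?lee_fin //.
by rewrite f1 ltry.
Qed.

Lemma int_k (k : R -> R) : measurable_fun setT k -> (forall x, `|k x| <= 1) ->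
  leb.-integrable setT (EFin \o (fun x => k x * f x)).
Proof.
move=> mk k1; eapply le_integrable; last exact: intf.
  by []. by apply/measurable_EFinP; apply: measurable_funM.
move=> x _ /=; rewrite lee_fin normrM -[leRHS]mul1r ler_wpM2r //.
Qed.

Lemma mcos (u : R) : measurable_fun setT (fun x : R => cos (x * u)).
Proof. by apply: continuous_measurable_fun => x; apply: continuous_comp; [apply: continuousM; [exact: cvg_id|exact: cvg_cst]|exact: continuous_cos]. Qed.
Lemma msin (u : R) : measurable_fun setT (fun x : R => sin (x * u)).
Proof. by apply: continuous_measurable_fun => x; apply: continuous_comp; [apply: continuousM; [exact: cvg_id|exact: cvg_cst]|exact: continuous_sin]. Qed.


Definition Cf u := \int[leb]_(x in setT) (cos (x * u) * f x).
Definition Sf u := \int[leb]_(x in setT) (sin (x * u) * f x).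
Lemma intc u : leb.-integrable setT (EFin \o (fun x => cos (x * u) * f x)).
Proof. by apply: int_k; [exact: mcos|move=> x; exact: cos_max]. Qed.
Lemma ints u : leb.-integrable setT (EFin \o (fun x => sin (x * u) * f x)).
Proof. by apply: int_k; [exact: msin|move=> x; exact: sin_max]. Qed.

Lemma S0 u : Sf u = 0.
Proof.
have mh : measurable_fun setT (fun x : R => sin (x * u) * f x) by apply: measurable_funM => //; exact: msin.
have [_ e] := @transfer R (fun x => - x) (mneg R) (@mp_neg R) _ mh (ints u).
have e2 : Sf u = - Sf u.
  rewrite {1}/Sf /Rintegral -e.
  rewrite -[X in _ = X]mulN1r -RintegralZl //; last exact: ints.
  rewrite /Rintegral; congr fine; apply: eq_integral => x _ /=.
  by rewrite -fe mulNr sinN mulN1r mulNr.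
by move: e2; set s := Sf u => h; lra.
Qed.

Lemma intZ (k : R) (g : R -> R) : leb.-integrable setT (EFin \o g) ->
  leb.-integrable setT (EFin \o (fun x => k * g x)).
Proof.
move=> ig; eapply eq_integrable; last exact: (integrableZl measurableT k ig); first exact: measurableT.
by move=> x _ /=; rewrite EFinM.
Qed.

Lemma mcosa (a u : R) : measurable_fun setT (fun x : R => cos ((x + a) * u)).
Proof. by apply: continuous_measurable_fun => x; apply: continuous_comp; [apply: continuousM; [apply: continuousD; [exact: cvg_id|exact: cvg_cst]|exact: cvg_cst]|exact: continuous_cos]. Qed.
Lemma msina (a u : R) : measurable_fun setT (fun x : R => sin ((x + a) * u)).
Proof. by apply: continuous_measurable_fun => x; apply: continuous_comp; [apply: continuousM; [apply: continuousD; [exact: cvg_id|exact: cvg_cst]|exact: cvg_cst]|exact: continuous_sin]. Qed.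

Lemma shiftc a u : leb.-integrable setT (EFin \o (fun x => cos (x * u) * f (x - a))) /\
  \int[leb]_(x in setT) (cos (x * u) * f (x - a)) = cos (a * u) * Cf u.
Proof.
have mh : measurable_fun setT (fun x : R => cos ((x + a) * u) * f x).
  by apply: measurable_funM => //; exact: mcosa.
have ih : leb.-integrable setT (EFin \o (fun x : R => cos ((x + a) * u) * f x)).
  by apply: int_k; [exact: mcosa|move=> x; exact: cos_max].
have [i2 e] := @transfer R (fun x => x - a) (@mshift R a) (@mp_shift R a) _ mh ih.
have ee : (fun x : R => cos ((x - a + a) * u) * f (x - a)) = (fun x => cos (x * u) * f (x - a)).
  by apply/funext => x; rewrite subrK.
split; first by eapply eq_integrable; last exact: i2; first exact: measurableT; move=> x _ /=; rewrite subrK.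
transitivity (\int[leb]_(x in setT) (cos ((x + a) * u) * f x)).
  by rewrite /Rintegral -e; congr fine; apply: eq_integral => x _ /=; rewrite subrK.
transitivity (\int[leb]_(x in setT) (cos (a * u) * (cos (x * u) * f x) - sin (a * u) * (sin (x * u) * f x))).
  by apply: eq_Rintegral => x _; rewrite mulrDl cosD; ring.
rewrite RintegralB //; [|exact: intZ _ _ (intc u)|exact: intZ _ _ (ints u)].
rewrite RintegralZl //; last exact: intc u. rewrite RintegralZl //; last exact: ints u.
by rewrite -/(Cf u) -/(Sf u) S0 mulr0 subr0.
Qed.

Lemma shifts a u : leb.-integrable setT (EFin \o (fun x => sin (x * u) * f (x - a))) /\
  \int[leb]_(x in setT) (sin (x * u) * f (x - a)) = sin (a * u) * Cf u.
Proof.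
have mh : measurable_fun setT (fun x : R => sin ((x + a) * u) * f x).
  by apply: measurable_funM => //; exact: msina.
have ih : leb.-integrable setT (EFin \o (fun x : R => sin ((x + a) * u) * f x)).
  by apply: int_k; [exact: msina|move=> x; exact: sin_max].
have [i2 e] := @transfer R (fun x => x - a) (@mshift R a) (@mp_shift R a) _ mh ih.
have ee : (fun x : R => sin ((x - a + a) * u) * f (x - a)) = (fun x => sin (x * u) * f (x - a)).
  by apply/funext => x; rewrite subrK.
split; first by eapply eq_integrable; last exact: i2; first exact: measurableT; move=> x _ /=; rewrite subrK.
transitivity (\int[leb]_(x in setT) (sin ((x + a) * u) * f x)).
  by rewrite /Rintegral -e; congr fine; apply: eq_integral => x _ /=; rewrite subrK.
transitivity (\int[leb]_(x in setT) (cos (a * u) * (sin (x * u) * f x) + sin (a * u) * (cos (x * u) * f x))).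
  by apply: eq_Rintegral => x _; rewrite mulrDl sinD; ring.
rewrite RintegralD //; [|exact: intZ _ _ (ints u)|exact: intZ _ _ (intc u)].
rewrite RintegralZl //; last exact: ints u. rewrite RintegralZl //; last exact: intc u.
by rewrite -/(Cf u) -/(Sf u) S0 mulr0 add0r.
Qed.

Lemma mixc (p a b u : R) :
  \int[leb]_(x in setT) (cos (x * u) * (p * f (x - a) + (1 - p) * f (x - b))) =
  (p * cos (a * u) + (1 - p) * cos (b * u)) * Cf u.
Proof.
have [ia ea] := shiftc a u; have [ib eb] := shiftc b u.
transitivity (\int[leb]_(x in setT) (p * (cos (x * u) * f (x - a)) + (1 - p) * (cos (x * u) * f (x - b)))).
  by apply: eq_Rintegral => x _; ring.
have i1 := intZ p _ ia; have i2 := intZ (1 - p) _ ib.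
rewrite RintegralD // RintegralZl // RintegralZl //.
by rewrite ea eb; ring.
Qed.
Lemma mixs (p a b u : R) :
  \int[leb]_(x in setT) (sin (x * u) * (p * f (x - a) + (1 - p) * f (x - b))) =
  (p * sin (a * u) + (1 - p) * sin (b * u)) * Cf u.
Proof.
have [ia ea] := shifts a u; have [ib eb] := shifts b u.
transitivity (\int[leb]_(x in setT) (p * (sin (x * u) * f (x - a)) + (1 - p) * (sin (x * u) * f (x - b)))).
  by apply: eq_Rintegral => x _; ring.
have i1 := intZ p _ ia; have i2 := intZ (1 - p) _ ib.
rewrite RintegralD // RintegralZl // RintegralZl //.
by rewrite ea eb; ring.
Qed.

Lemma C0 : Cf 0 = 1.
Proof.
rewrite /Cf; under eq_Rintegral do rewrite mulr0 cos0 mul1r.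
by rewrite /Rintegral f1.
Qed.

Lemma Cnear : exists2 e : R, 0 < e & forall u, ball 0 e u -> Cf u != 0.
Proof.
have hc := @continuity_under_integral R _ _ leb (fun l x => cos (x * l) * f x) setT measurableT (-1) 1.
have cf : {ae leb, forall y, setT y -> {in `](-1), 1[%classic, continuous ((fun l x => cos (x * l) * f x) ^~ y)}}.
  apply: aeW => y _ l _ /=; apply: continuousM; last exact: cvg_cst.
  apply: continuous_comp; last exact: continuous_cos.
  by apply: continuousM; [exact: cvg_cst|exact: cvg_id].
have ub : forall l, `](-1), 1[%classic l -> {ae leb, forall y, setT y -> `|cos (y * l) * f y| <= f y}.
  move=> l _; apply: aeW => y _; rewrite normrM (ger0_norm (f0 y)).
  have := cos_max (y * l); have := f0 y; set c := `|cos (y * l)|; nra.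
have := hc (fun l _ => intc l) cf f intf ub 0.
rewrite inE /= in_itv /= ltrN10 ltr01 => /(_ isT) c0.
move/cvgr_neq0: c0; rewrite -/(Cf 0) C0 oner_neq0 => /(_ isT).
move=> /nbhs_ballP [e e0 he]; exists e => // u /he.
Qed.
End F.

Lemma Im_div (R : realType) (x y c d : R) :
  complex.Im ((x +i* y)%C / (c +i* d)%C) = (y * c - x * d) / (c ^+ 2 + d ^+ 2).
Proof. rewrite /=; rewrite !mulrA; ring. Qed.

Lemma Mth_eq (R : realType) (p a b u : R) : Mth (p, a, b) u =
  ((p * cos (u * a) + (1 - p) * cos (u * b)) +i* (p * sin (u * a) + (1 - p) * sin (u * b)))%C.
Proof. rewrite /Mth /cexpi /=; congr (_ +i* _)%C; ring. Qed.

Lemma Mpos (R : realType) (p a b u : R) : 0 < p -> p < 2^-1 ->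
  0 < (p * cos (u * a) + (1 - p) * cos (u * b)) ^+ 2 + (p * sin (u * a) + (1 - p) * sin (u * b)) ^+ 2.
Proof.
move=> hp hp'.
have h1 := cos2Dsin2 (u * a); have h2 := cos2Dsin2 (u * b).
set c1 := cos (u * a) in h1 *; set s1 := sin (u * a) in h1 *.
set c2 := cos (u * b) in h2 *; set s2 := sin (u * b) in h2 *.
have h3 : 0 <= (c1 + c2) ^+ 2 + (s1 + s2) ^+ 2 by rewrite addr_ge0 ?sqr_ge0.
have e : (p * c1 + (1 - p) * c2) ^+ 2 + (p * s1 + (1 - p) * s2) ^+ 2 =
  (1 - 2 * p) ^+ 2 + p * (1 - p) * ((c1 + c2) ^+ 2 + (s1 + s2) ^+ 2).
  have -> : (c1 + c2) ^+ 2 + (s1 + s2) ^+ 2 = (c1 ^+ 2 + s1 ^+ 2) + (c2 ^+ 2 + s2 ^+ 2) + 2 * (c1 * c2 + s1 * s2) by ring.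
  rewrite h1 h2.
  have -> : (p * c1 + (1 - p) * c2) ^+ 2 + (p * s1 + (1 - p) * s2) ^+ 2 =
     p ^+ 2 * (c1 ^+ 2 + s1 ^+ 2) + (1 - p) ^+ 2 * (c2 ^+ 2 + s2 ^+ 2) + 2 * p * (1 - p) * (c1 * c2 + s1 * s2) by ring.
  rewrite h1 h2; ring.
rewrite e; have : 0 < (1 - 2 * p) ^+ 2.
  by rewrite exprn_even_gt0 //; apply/negP => /eqP h; lra.
move=> hq; have : 0 <= p * (1 - p) * ((c1 + c2) ^+ 2 + (s1 + s2) ^+ 2).
  by rewrite mulr_ge0 // mulr_ge0 //; lra.
lra.
Qed.

Theorem theorem1 (R : realType) (f : R -> R) (Theta : set (R * R * R))
  (th0 : R * R * R) :
  prob_density f -> in_L2 f -> (forall x, f x = f (- x)) ->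
  compact Theta ->
  (forall th, Theta th ->
     0 < th.1.1 < 2^-1 /\ th.1.2 != th.2) ->
  Theta th0 ->
  forall th, Theta th ->
    ((forall u : R, complex.Im (fourier (mixture f th0) u / Mth th u) = 0)
     <-> th = th0).
Proof.
move=> [mf [f0 f1]] _ fe _ hT hth0 th hth.
case: th0 hth0 => [[p0 a0] b0] hth0; case: th hth => [[p a] b] hth.
have [/andP[hp0 hp0'] hab0] : 0 < p0 < 2^-1 /\ a0 != b0 := hT _ hth0.
have [/andP[hp hp'] hab] : 0 < p < 2^-1 /\ a != b := hT _ hth.
have four u : fourier (mixture f (p0, a0, b0)) u =
   (((p0 * cos (u * a0) + (1 - p0) * cos (u * b0)) * Cf R f u) +i*
    ((p0 * sin (u * a0) + (1 - p0) * sin (u * b0)) * Cf R f u))%C.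
  rewrite /fourier /mixture /=.
  rewrite mixc // mixs //.
  by rewrite ![u * _]mulrC.
split; last first.
  move=> e u; rewrite e;  rewrite four Mth_eq Im_div.
  by rewrite (_ : _ - _ = 0) ?mul0r //; ring.
move=> H.
have [e e0 he] := @Cnear R f mf f0 f1.
pose c1 := p0 * p; pose c2 := p0 * (1 - p); pose c3 := (1 - p0) * p; pose c4 := (1 - p0) * (1 - p).
have hz : forall u, ball 0 e u -> Ssum R c1 c2 c3 c4 (a0 - a) (a0 - b) (b0 - a) (b0 - b) 0 u = 0.
  move=> u hu; have := H u; rewrite four Mth_eq Im_div.
  move/eqP; rewrite mulf_eq0 invr_eq0 (gt_eqF (Mpos _ _ _ _ _ hp hp')) orbF => /eqP h.
  have hC := he u hu.
  have : Cf R f u * Ssum R c1 c2 c3 c4 (a0 - a) (a0 - b) (b0 - a) (b0 - b) 0 u = 0.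
    rewrite -h /Ssum !expr0 !mulr1 /c1 /c2 /c3 /c4.
    rewrite ![(_ - _) * u]mulrBl !sinB ![_ * u]mulrC; ring.
  by move/eqP; rewrite mulf_eq0 (negbTE hC) /= => /eqP.
have zm := @zero_moments R _ _ _ _ _ _ _ _ e e0 hz.
have m (k : nat) : En _ p0 a0 b0 p a b k.*2.+1 = 0.
  by have := zm k; rewrite Csum0.
have := @alg_main _ _ _ _ _ _ _ hp0 hp0' hp hp' hab0 hab (m 0%N) (m 1%N) (m 2%N) (m 3%N).
done.
Qed.
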